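(* Let $G$ be a group of order $32$. Then $\operatorname{rdim}(G) \le 5$.
   Context: $\operatorname{rdim}(G)$ is the minimal dimension of a faithful complex linear representation of $G$. *)

(* Defs.v *)
From mathcomp Require Import all_boot all_order all_algebra all_fingroup all_solvable all_field all_character.
Set Implicit Arguments. Unset Strict Implicit. Unset Printing Implicit Defensive.

(* Complex numbers are modelled by algC (algebraic complex numbers); every
   complex representation of a finite group is realizable over algC. *)
Definition has_faithful_rep (gT : finGroupType) (G : {group gT}) (n : nat) : Prop :=
  exists rG : mx_representation algC G n, mx_faithful rG.

(* Main.v *)
Require Import Defs.
From mathcomp Require Import all_boot all_order all_algebra all_fingroup all_solvable all_field all_character.
From mathcomp Require Import zify.
Module H1.
Set Implicit Arguments. Unset Strict Implicit. Unset Printing Implicit Defensive.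
Import GroupScope Order.TTheory GRing.Theory Num.Theory.
Local Open Scope ring_scope.

Section Key.
Variables (gT : finGroupType) (G : {group gT}).

Definition kerS (s : seq (Iirr G)) : {set gT} := \bigcap_(i <- s) cfker 'chi[G]_i.

Lemma half_card (A A' : {group gT}) : A' \proper A -> (#|A'| * 2 <= #|A|)%N.
Proof.
move=> pr; have sub := proper_sub pr; have lt := proper_card pr.
have /dvdnP[k hk] := cardSg sub.
have pos : (0 < #|A'|)%N := cardG_gt0 A'.
rewrite hk in lt *.
have : (1 < k)%N by case: k hk lt => [|[|k]] //= _; rewrite ?mul0n ?mul1n ?ltnn.
move=> k1; by rewrite mulnC leq_mul2r k1 orbT.
Qed.

Lemma key (P : pred (Iirr G)) (B : {set gT}) :
  (forall i, P i -> B \subset cfker 'chi[G]_i) ->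
  forall n (A : {group gT}),
  (forall a, a \in A -> a \notin B -> exists2 i, P i & a \notin cfker 'chi[G]_i) ->
  (#|A| <= 2 ^ n * #|A :&: B|)%N ->
  exists s : seq (Iirr G), [/\ all P s, (size s <= n)%N & A :&: kerS s \subset B].
Proof.
move=> PB n; elim: n => [|n IH] A sep hcard.
  exists [::]; split=> //; rewrite /kerS big_nil setIT.
  rewrite expn0 mul1n in hcard.
  have e : A \subset A :&: B by rewrite -(geq_leqif (subset_leqif_card (subsetIl A B))).
  exact: subset_trans e (subsetIr _ _).
have [sAB|nsAB] := boolP (A \subset B).
  by exists [::]; split=> //; rewrite (subset_trans (subsetIl _ _) sAB).
have [a Aa nBa] : exists2 a, a \in A & a \notin B.
  by case/subsetPn: nsAB => a; exists a.
have [i Pi nKa] := sep a Aa nBa.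
set A' := (A :&: cfker 'chi[G]_i)%G.
have prA' : A' \proper A.
  rewrite properE subsetIl /=; apply/subsetPn; exists a => //.
  by rewrite inE (negbTE nKa) andbF.
have hB : A' :&: B = A :&: B.
  by rewrite /A' /= -setIA (setIidPr (PB i Pi)).
have := half_card prA'; move=> h2.
have [s [Ps ss sub]] : exists s : seq (Iirr G),
   [/\ all P s, (size s <= n)%N & A' :&: kerS s \subset B].
  apply: IH.
    by move=> b /setIP [Ab _] nb; apply: sep.
  rewrite hB; rewrite expnS in hcard.
  rewrite -(leq_pmul2r (isT : (0 < 2)%N)); apply: leq_trans h2 _.
  by apply: leq_trans hcard _; rewrite mulnAC; set u := (2 ^ n)%N; set v := #|_|; nia.
exists (i :: s); split=> //=; first by rewrite Pi.
by rewrite /kerS big_cons setIA.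
Qed.

End Key.

End H1.

Module H2.
Import H1.
Set Implicit Arguments. Unset Strict Implicit. Unset Printing Implicit Defensive.
Import GroupScope Order.TTheory GRing.Theory Num.Theory.
Local Open Scope ring_scope.

Section Assembly.
Variables (gT : finGroupType) (G : {group gT}).

Lemma sum_char (s : seq (Iirr G)) : (\sum_(j <- s) 'chi[G]_j) \is a character.
Proof. by apply: rpred_sum => j _; exact: irr_char. Qed.

Lemma constt_sum (s : seq (Iirr G)) i :
  i \in s -> i \in irr_constt (\sum_(j <- s) 'chi[G]_j).
Proof.
move=> si; rewrite inE cfdot_suml.
have -> : \sum_(j <- s) '['chi[G]_j, 'chi_i] = (count_mem i s)%:R.
  elim: s {si} => [|j s IH]; first by rewrite big_nil.
  by rewrite big_cons IH cfdot_irr /= natrD eq_sym.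
by rewrite pnatr_eq0 -lt0n -has_count has_pred1.
Qed.

Lemma ker_sum (s : seq (Iirr G)) : cfker (\sum_(j <- s) 'chi[G]_j) \subset kerS s.
Proof.
have H i : i \in s -> cfker (\sum_(j <- s) 'chi[G]_j) \subset cfker 'chi_i.
  by move=> si; apply: cfker_constt; [exact: sum_char | exact: constt_sum].
rewrite /kerS; set phi := \sum_(j <- s) _.
suff: forall t, {subset t <= s} -> cfker phi \subset \bigcap_(i <- t) cfker 'chi[G]_i by apply.
elim=> [|j t IH] st; first by rewrite big_nil subsetT.
rewrite big_cons subsetI H ?st ?mem_head // IH // => k kt.
by apply: st; rewrite inE kt orbT.
Qed.

Lemma deg_le (i : Iirr G) (d : nat) :
  (#|G : 'Z(G)| < d.+1 ^ 2)%N -> 'chi[G]_i 1%g <= d%:R.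
Proof.
move=> hd; have b := irr1_bound i.
have sZ : 'Z(G) \subset 'Z('chi[G]_i)%CF.
  by rewrite -cap_cfcenter_irr (bigcap_inf i).
have le1 : (#|G : 'Z('chi[G]_i)%CF| <= #|G : 'Z(G)|)%N.
  by apply: dvdn_leq; [exact: indexg_gt0 | exact: indexgS].
move: b.1; rewrite irr1_degree -natrX ler_nat => h.
rewrite ler_nat; move: h; set k := (X in (X ^ 2)%N) => h.
have h2 : (k ^ 2 < d.+1 ^ 2)%N by apply: leq_ltn_trans h (leq_ltn_trans le1 hd).
by rewrite ltn_exp2r in h2.
Qed.

Lemma sum_deg_le (s : seq (Iirr G)) (d : nat) :
  (forall i, i \in s -> 'chi[G]_i 1%g <= d%:R) ->
  \sum_(j <- s) 'chi[G]_j 1%g <= (size s * d)%:R.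
Proof.
elim: s => [|j s IH] hs; first by rewrite big_nil.
rewrite big_cons /= mulSn natrD lerD ?hs ?mem_head // IH // => k ks.
by apply: hs; rewrite inE ks orbT.
Qed.

Lemma realize (s : seq (Iirr G)) :
  nilpotent G -> 'Z(G) :&: kerS s \subset [1] ->
  \sum_(j <- s) 'chi[G]_j 1%g <= 5%:R ->
  exists2 n : nat, (n <= 5)%N & has_faithful_rep G n.
Proof.
move=> nilG hZ h5.
have /char_reprP [rG def] := sum_char s.
exists (rdegree rG).
  rewrite -(ler_nat algC); apply: le_trans h5.
  by rewrite -(cfRepr1 rG) -def sum_cfunE.
exists rG; rewrite /mx_faithful -cfker_repr -def.
have K1 : cfker (\sum_(j <- s) 'chi[G]_j) :=: 1%g.
  apply: (TI_center_nil nilG (cfker_normal _)).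
  apply/trivgP; apply: subset_trans hZ.
  by rewrite setIC; apply: setSI; exact: ker_sum.
by rewrite K1.
Qed.


End Assembly.

End H2.

Module H3.
Import H1 H2.
Set Implicit Arguments. Unset Strict Implicit. Unset Printing Implicit Defensive.
Import GroupScope.

Lemma div32 b : (b %| 32)%N -> b \in [:: 1; 2; 4; 8; 16; 32]%N.
Proof. by rewrite (dvdn_divisors _ (isT : (0 < 32)%N)). Qed.

Lemma div32_big b : (b %| 32)%N -> (16 < b)%N -> b = 32%N.
Proof.
move/div32; rewrite !inE.
by case/or4P=> [/eqP->|/eqP->|/eqP->|/orP[/eqP->|/orP[/eqP->|/eqP->]]].
Qed.

Lemma der_small (gT : finGroupType) (G : {group gT}) :
  #|G| = 32%N -> #|'Z(G)| = 8%N -> (#|G^`(1)| <= 2)%N.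
Proof.
move=> HG HZ; set Z := 'Z(G).
have sZG : Z \subset G := center_sub G.
have nZG : G \subset 'N(Z) := normal_norm (center_normal G).
have iGZ : #|G : Z| = 4%N.
  by have := Lagrange sZG; rewrite HG HZ => h; apply/eqP; rewrite -(eqn_pmul2l (isT : (0 < 8)%N)) h.
have qc : #|G / Z| = 4%N by rewrite card_quotient.
have abq : abelian (G / Z) by apply: (@card_p2group_abelian _ 2) => //; rewrite qc.
have sG'Z : G^`(1) \subset Z := der1_min nZG abq.
have nGZ : ~~ (G \subset Z).
  apply/negP=> sGZ; have := subset_leq_card sGZ; by rewrite HG HZ.
have [x Gx nZx] : exists2 x, x \in G & x \notin Z.
  by case/subsetPn: nGZ => x; exists x.
have [y Gy nCy] : exists2 y, y \in G & y \notin 'C[x].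
  have : ~~ (G \subset 'C[x]).
    by rewrite sub_cent1; apply: contra nZx => cx; rewrite inE Gx.
  by case/subsetPn => y; exists y.
have x2Z : x ^+ 2 \in Z.
  have Nx := subsetP nZG x Gx.
  set u := coset Z x.
  have Gu : u \in G / Z by rewrite mem_quotient.
  have d4 : (#[u] %| 4)%N by rewrite -qc order_dvdG.
  have u2 : u ^+ 2 = 1.
    apply/eqP; rewrite -order_dvdn.
    move: d4; rewrite (dvdn_divisors _ (isT : (0 < 4)%N)) /= !inE.
    case/or3P=> /eqP e; rewrite e //.
    exfalso; apply/negP: nZx; rewrite negbK.
    have cyc : cyclic (G / Z).
      apply/cyclicP; exists u; apply/eqP; rewrite eq_sym eqEcard cycle_subG Gu /=.
      by rewrite -orderE e qc.
    have abG := cyclic_center_factor_abelian cyc.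
    by rewrite /Z (center_idP abG).
  apply: coset_idr; first by rewrite groupX.
  by rewrite morphX.
set c := [~ x, y].
have cZ : c \in Z by apply: (subsetP sG'Z); apply: mem_commg.
have cC : c \in 'C(G) by move: cZ; rewrite inE => /andP[_ ->].
have cxc : commute x c by rewrite /commute (centP cC x Gx).
have c2 : c ^+ 2 = 1.
  rewrite -commXg //; apply/eqP/commgP.
  by move: x2Z; rewrite inE => /andP[_ /centP h]; exact: h y Gy.
have oc : (#[c] <= 2)%N by apply: dvdn_leq => //; rewrite order_dvdn c2.
set K := <[x]> <*> <[y]>.
have sKG : K \subset G by rewrite join_subG !cycle_subG Gx Gy.
have cKZ : Z \subset 'C(K).
  by rewrite centsC (subset_trans sKG) // centsC subsetIr.
set H1 := <[x]> <*> Z.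
set H2 := K <*> Z.
have sH1C : H1 \subset 'C[x].
  rewrite join_subG cycle_subG cent1id /= sub_cent1.
  by apply: (subsetP _ x Gx); rewrite centsC subsetIr.
have cardH1 : (16 <= #|H1|)%N.
  have prZ : Z \proper H1.
    rewrite properE joing_subr; apply/subsetPn; exists x => //.
    by rewrite mem_gen // inE cycle_id.
  have := proper_card prZ; have := cardSg (proper_sub prZ); rewrite HZ.
  case/dvdnP=> k ->; case: k => [|[|k]] //; lia.
have sH1H2 : H1 \subset H2.
  by rewrite join_subG joing_subr andbT (subset_trans _ (joing_subl _ _)) // joing_subl.
have prH1 : H1 \proper H2.
  rewrite properE sH1H2; apply/subsetPn; exists y.
    by rewrite mem_gen // inE mem_gen // inE cycle_id orbT.
  by apply: contra nCy; apply: (subsetP sH1C).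
have sH2G : H2 \subset G by rewrite join_subG sKG sZG.
have eH2 : H2 = G.
  apply/eqP; rewrite eqEcard sH2G HG.
  have := proper_card prH1; have := cardSg sH2G; rewrite HG => /div32_big h hl.
  by rewrite h //; apply: leq_trans hl.
have cp : K \* Z = H2 by rewrite cprodEY.
have := der_cprod 1 cp; rewrite (derG1P (center_abelian G)) cprodg1 => e.
have -> : G^`(1) = K^`(1) by rewrite e -eH2.
have cCK : c \in 'C(K) by apply: (subsetP (centS sKG)).
by rewrite (der1_joing_cycles cCK) -orderE.
Qed.

End H3.

Module H4.
Import H1 H2 H3.
Set Implicit Arguments. Unset Strict Implicit. Unset Printing Implicit Defensive.
Import GroupScope Order.TTheory GRing.Theory Num.Theory.
Local Open Scope ring_scope.

Section Main.
Variables (gT : finGroupType) (G : {group gT}).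

Lemma gen_case (n d : nat) : nilpotent G ->
  (#|'Z(G)| <= 2 ^ n)%N -> (#|G : 'Z(G)| < d.+1 ^ 2)%N -> (n * d <= 5)%N ->
  exists2 m : nat, (m <= 5)%N & has_faithful_rep G m.
Proof.
move=> nilG hZ hd hnd.
have [s [_ ss sub]] : exists s : seq (Iirr G),
    [/\ all predT s, (size s <= n)%N & 'Z(G) :&: kerS s \subset [1]].
  apply: (@key _ G predT [1] (fun i _ => sub1G _)).
    move=> a Za na; case: (pickP (fun i => a \notin cfker 'chi[G]_i)) => [i ni|none].
      by exists i.
    exfalso; apply/negP: na; rewrite negbK -(TI_cfker_irr G); apply/bigcapP => i _.
    by have := none i; move/negbFE.
  by rewrite (setIidPr (sub1G _)) cards1 muln1.
apply: (realize nilG sub); apply: le_trans (sum_deg_le (d := d) _) _.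
  by move=> i _; apply: deg_le.
by rewrite ler_nat; apply: leq_trans hnd; rewrite leq_mul2r ss orbT.
Qed.

Lemma sep_all (A : {group gT}) a : a \in A -> a \notin [1] ->
  exists2 i : Iirr G, predT i & a \notin cfker 'chi[G]_i.
Proof.
move=> _ na; case: (pickP (fun i => a \notin cfker 'chi[G]_i)) => [i ni|none].
  by exists i.
exfalso; apply/negP: na; rewrite negbK -(TI_cfker_irr G); apply/bigcapP => i _.
by have := none i; move/negbFE.
Qed.

Lemma spec_case : nilpotent G -> #|'Z(G)| = 8%N ->
  #|'Z(G) :&: (G^`(1))%g| = 2%N -> #|G : 'Z(G)| = 4%N ->
  exists2 m : nat, (m <= 5)%N & has_faithful_rep G m.
Proof.
move=> nilG hZ hZD hi.
pose P := [pred i : Iirr G | 'chi[G]_i \is a linear_char].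
have [s1 [Ps1 ss1 sub1]] : exists s : seq (Iirr G),
    [/\ all P s, (size s <= 2)%N & 'Z(G) :&: kerS s \subset (G^`(1))%g].
  apply: key.
  - by move=> i; rewrite inE /= lin_irr_der1.
  - move=> a Za na; case: (pickP (fun i => P i && (a \notin cfker 'chi[G]_i))) => [i /andP[Pi ni]|none].
      by exists i.
    exfalso; apply/negP: na; rewrite negbK -(cap_cfker_lin_irr G); apply/bigcapP => i Pi.
    by have := none i; rewrite /P inE Pi /= => /negbFE.
  - by rewrite hZ hZD.
have [s2 [_ ss2 sub2]] : exists s : seq (Iirr G),
    [/\ all predT s, (size s <= 1)%N & ('Z(G) :&: (G^`(1))%g)%G :&: kerS s \subset [1]].
  apply: (@key _ G predT [1] (fun i _ => sub1G _)).
    by move=> a; apply: sep_all.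
  by rewrite (setIidPr (sub1G _)) cards1 muln1 hZD.
apply: (@realize _ G (s1 ++ s2) nilG).
  apply/subsetP=> z; rewrite {1}/kerS big_cat /= => /setIP[Zz /setIP[k1 k2]].
  apply: (subsetP sub2); apply/setIP; split=> //; apply/setIP; split=> //.
  by apply: (subsetP sub1); apply/setIP.
rewrite big_cat /=.
have h1 : \sum_(j <- s1) 'chi[G]_j 1%g <= (size s1 * 1)%:R.
  apply: sum_deg_le => i i1; move/allP: Ps1 => /(_ i i1); rewrite inE /= => li.
  by rewrite lin_char1.
have h2 : \sum_(j <- s2) 'chi[G]_j 1%g <= (size s2 * 2)%:R.
  by apply: sum_deg_le => i _; apply: deg_le; rewrite hi.
apply: le_trans (lerD h1 h2) _; rewrite -natrD ler_nat; lia.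
Qed.
End Main.


Local Close Scope ring_scope.
Lemma main_aux (gT : finGroupType) (G : {group gT}) :
  #|G| = 32 -> exists2 n : nat, n <= 5 & has_faithful_rep G n.
Proof.
move=> HG.
have pG : (2.-group G)%g by rewrite /pgroup HG.
have nilG := pgroup_nil pG.
have Lg : (#|'Z(G)| * #|G : 'Z(G)|)%N = 32 by rewrite -HG Lagrange ?center_sub.
have : (#|'Z(G)| %| 32)%N by rewrite -HG cardSg ?center_sub.
move=> /div32; rewrite !inE.
case/or4P=> [/eqP hZ|/eqP hZ|/eqP hZ|/orP[/eqP hZ|/orP[/eqP hZ|/eqP hZ]]];
  rewrite hZ in Lg.
- have hi : #|G : 'Z(G)| = 32%N by rewrite -Lg mul1n.
  by apply: (@gen_case _ G 0 5 nilG); rewrite ?hZ ?hi.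
- have hi : #|G : 'Z(G)| = 16%N by apply/eqP; rewrite -(eqn_pmul2l (isT : (0 < 2)%N)) Lg.
  by apply: (@gen_case _ G 1 4 nilG); rewrite ?hZ ?hi.
- have hi : #|G : 'Z(G)| = 8%N by apply/eqP; rewrite -(eqn_pmul2l (isT : (0 < 4)%N)) Lg.
  by apply: (@gen_case _ G 2 2 nilG); rewrite ?hZ ?hi.
- have hi : #|G : 'Z(G)| = 4%N by apply/eqP; rewrite -(eqn_pmul2l (isT : (0 < 8)%N)) Lg.
  apply: spec_case => //.
  apply/eqP; rewrite eqn_leq; apply/andP; split.
    apply: leq_trans (der_small HG hZ); exact/subset_leq_card/subsetIr.
  have ne : G^`(1) :&: 'Z(G) != 1.
    apply: meet_center_nil nilG (der_normal 1 G) _.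
    apply/negP=> /eqP /derG1P abG.
    by move: hZ; rewrite (center_idP abG) HG.
  rewrite setIC in ne.
  have h := cardG_gt1 ('Z(G) :&: G^`(1))%G; simpl in h; by rewrite h.
- have hi : #|G : 'Z(G)| = 2%N by apply/eqP; rewrite -(eqn_pmul2l (isT : (0 < 16)%N)) Lg.
  by apply: (@gen_case _ G 4 1 nilG); rewrite ?hZ ?hi.
- have hi : #|G : 'Z(G)| = 1%N by apply/eqP; rewrite -(eqn_pmul2l (isT : (0 < 32)%N)) Lg.
  by apply: (@gen_case _ G 5 1 nilG); rewrite ?hZ ?hi.
Qed.

End H4.

Theorem lemma3p3 (gT : finGroupType) (G : {group gT}) :
  #|G| = 32 -> exists2 n : nat, n <= 5 & has_faithful_rep G n.
Proof. exact: H4.main_aux. Qed.
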